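(* Let $B$ be an $n\times n$ random matrix whose entries are independent Bernoulli random variables with mean $p\in[0,1]$, and let $\varepsilon\in(0,1/2]$. Then with probability at least $1-\exp(-\varepsilon n/2)$, the total number of ones contained in those rows of $B$ that have more than $21pn+2\ln(\varepsilon^{-1})$ ones is at most $\varepsilon n$. *)

(* Defs.v *)
From mathcomp Require Import all_boot.
From Stdlib Require Import Reals.
Set Implicit Arguments. Unset Strict Implicit. Unset Printing Implicit Defensive.

Definition bmat (n : nat) := {ffun 'I_n * 'I_n -> bool}.

Definition bern_weight (n : nat) (p : R) (B : bmat n) : R :=
  \big[Rmult/R1]_(ij : 'I_n * 'I_n) (if B ij then p else (R1 - p)%R).

Definition bern_prob (n : nat) (p : R) (E : pred (bmat n)) : R :=
  \big[Rplus/R0]_(B : bmat n | E B) bern_weight p B.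

Definition row_ones (n : nat) (B : bmat n) (i : 'I_n) : nat :=
  (\sum_(j < n) nat_of_bool (B (i, j)))%N.

Definition heavy_row (n : nat) (p eps : R) (B : bmat n) (i : 'I_n) : bool :=
  if Rlt_dec (21 * p * INR n + 2 * ln (/ eps))%R (INR (row_ones B i))
  then true else false.

Definition heavy_ones (n : nat) (p eps : R) (B : bmat n) : nat :=
  (\sum_(i < n | heavy_row p eps B i) row_ones B i)%N.

Definition good_event (n : nat) (p eps : R) : pred (bmat n) :=
  fun B => if Rle_dec (INR (heavy_ones p eps B)) (eps * INR n)%R
           then true else false.

(* Main.v *)
From HB Require Import structures.
Require Import Defs.
From mathcomp Require Import all_boot.
From Stdlib Require Import Reals Lra.
Set Warnings "-notation-overridden".

Lemma RaddA : associative Rplus. Proof. move=> x y z; ring. Qed.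
Lemma RmulA : associative Rmult. Proof. move=> x y z; ring. Qed.
Lemma Rplus_0_l' : left_id R0 Rplus. Proof. move=> x; apply: Rplus_0_l. Qed.
Lemma Rmult_1_l' : left_id R1 Rmult. Proof. move=> x; apply: Rmult_1_l. Qed.
HB.instance Definition _ := Monoid.isComLaw.Build R R0 Rplus RaddA Rplus_comm Rplus_0_l'.
HB.instance Definition _ := Monoid.isComLaw.Build R R1 Rmult RmulA Rmult_comm Rmult_1_l'.
Lemma Rmult_0_l' : left_zero R0 Rmult. Proof. move=> x; apply: Rmult_0_l. Qed.
Lemma Rmult_0_r' : right_zero R0 Rmult. Proof. move=> x; apply: Rmult_0_r. Qed.
HB.instance Definition _ := Monoid.isMulLaw.Build R R0 Rmult Rmult_0_l' Rmult_0_r'.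
Lemma RmulDl : left_distributive Rmult Rplus. Proof. move=> x y z; ring. Qed.
Lemma RmulDr : right_distributive Rmult Rplus. Proof. move=> x y z; ring. Qed.
HB.instance Definition _ := Monoid.isAddLaw.Build R Rmult Rplus RmulDl RmulDr.

Lemma sum_prod_bool (I : finType) (F : I -> bool -> R) :
  \big[Rplus/R0]_(f : {ffun I -> bool}) \big[Rmult/R1]_k F k (f k)
  = \big[Rmult/R1]_k (F k true + F k false)%R.
Proof. rewrite -bigA_distr_bigA; apply: eq_bigr => k _; by rewrite big_bool. Qed.

Local Open Scope R_scope.

Lemma sumR_le (I : finType) (P : pred I) (F G : I -> R) :
  (forall i, P i -> F i <= G i) ->
  \big[Rplus/R0]_(i | P i) F i <= \big[Rplus/R0]_(i | P i) G i.
Proof. move=> H; apply: (big_ind2 (fun x y => x <= y)) => //; [lra| move=> *; lra]. Qed.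

Lemma sumR_ge0 (I : finType) (P : pred I) (F : I -> R) :
  (forall i, P i -> 0 <= F i) -> 0 <= \big[Rplus/R0]_(i | P i) F i.
Proof. move=> H; apply: (big_ind (fun x => 0 <= x)) => //; [lra| move=> *; lra]. Qed.

Lemma prodR_ge0 (I : finType) (P : pred I) (F : I -> R) :
  (forall i, P i -> 0 <= F i) -> 0 <= \big[Rmult/R1]_(i | P i) F i.
Proof. move=> H; apply: (big_ind (fun x => 0 <= x)) => //; [lra| move=> *; nra]. Qed.

Lemma prodR_le (I : finType) (P : pred I) (F G : I -> R) :
  (forall i, P i -> 0 <= F i <= G i) ->
  \big[Rmult/R1]_(i | P i) F i <= \big[Rmult/R1]_(i | P i) G i.
Proof.
move=> H.
suff: 0 <= \big[Rmult/R1]_(i | P i) F i <= \big[Rmult/R1]_(i | P i) G i by case.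
apply: (big_ind2 (fun x y => 0 <= x <= y)) => //; [lra| move=> *; nra].
Qed.

Lemma exp_sum (I : finType) (P : pred I) (F : I -> R) :
  exp (\big[Rplus/R0]_(i | P i) F i) = \big[Rmult/R1]_(i | P i) exp (F i).
Proof. apply: (big_morph exp exp_plus exp_0). Qed.

Lemma INR_sum (I : finType) (P : pred I) (F : I -> nat) :
  INR (\sum_(i | P i) F i)%N = \big[Rplus/R0]_(i | P i) INR (F i).
Proof. apply: (big_morph INR (fun x y => plus_INR x y)) => //. Qed.

Lemma prod_const (n : nat) (x : R) : \big[Rmult/R1]_(i < n) x = x ^ n.
Proof. rewrite big_const_ord; elim: n => [//|n IH] /=. by rewrite IH. Qed.

Lemma pow_le_exp (a : R) (n : nat) : 0 <= a -> (1 + a) ^ n <= exp (a * INR n).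
Proof.
move=> Ha; elim: n => [|n IH]; first by rewrite /= Rmult_0_r exp_0; lra.
rewrite S_INR /= Rmult_plus_distr_l Rmult_1_r exp_plus Rmult_comm.
apply: Rmult_le_compat => //; first by apply: pow_le; lra.
all: have := exp_ineq1_le a; lra.
Qed.

Lemma rowconv (n : nat) (f : 'I_n -> bool) (H : ('I_n * 'I_n)%type -> R) :
  \big[Rmult/R1]_(k : ('I_n * 'I_n)%type) (if f k.1 then H k else 1)
  = \big[Rmult/R1]_(i < n) (if f i then \big[Rmult/R1]_(j < n) H (i, j) else 1).
Proof.
symmetry.
rewrite (eq_bigr (fun i => \big[Rmult/R1]_(j < n) (if f i then H (i,j) else 1))).
  rewrite (pair_big xpredT xpredT (fun i j => if f i then H (i, j) else 1)).
  by apply: eq_bigr => -[i j].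
move=> i _; case: (f i) => //; by rewrite big1.
Qed.

Definition Tt (n : nat) (p eps : R) := 21 * p * INR n + 2 * ln (/ eps).
Definition mm (p : R) := p * exp 2 + (1 - p).
Definition Gf (n : nat) (p eps : R) (f : {ffun 'I_n -> bool}) (B : bmat n) :=
  exp (- (eps * INR n)) *
  (\big[Rmult/R1]_(i < n) (if f i then exp (- Tt n p eps) else 1) *
   \big[Rmult/R1]_(k : ('I_n * 'I_n)%type) (if f k.1 then exp (2 * INR (B k)) else 1)).

Lemma total (n : nat) (p : R) : \big[Rplus/R0]_(B : bmat n) bern_weight p B = 1.
Proof.
rewrite /bern_weight (@sum_prod_bool _ (fun (k : ('I_n * 'I_n)%type) (b : bool) => if b then p else 1 - p)).
rewrite big1 // => k _; ring.
Qed.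

Lemma expec (n : nat) (p eps : R) (f : {ffun 'I_n -> bool}) :
  \big[Rplus/R0]_(B : bmat n) (bern_weight p B * Gf n p eps f B)
  = exp (- (eps * INR n)) *
    \big[Rmult/R1]_(i < n) (if f i then exp (- Tt n p eps) * mm p ^ n else 1).
Proof.
set E := exp _.
set C := \big[Rmult/R1]_(i < n) (if f i then exp (- Tt n p eps) else 1).
transitivity (\big[Rplus/R0]_(B : bmat n) ((E * C) *
   \big[Rmult/R1]_(k : ('I_n * 'I_n)%type) ((if B k then p else R1 - p) *
       (if f k.1 then exp (2 * INR (B k)) else 1)))).
  apply: eq_bigr => B _; rewrite /Gf big_split /= /bern_weight -/E -/C.
  set X := \big[Rmult/R1]_ij _. set Y := \big[Rmult/R1]_k _. change (X * (E * (C * Y)) = E * C * (X * Y)). ring.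
rewrite -big_distrr /=.
rewrite (@sum_prod_bool _ (fun (k : ('I_n * 'I_n)%type) (b : bool) => (if b then p else R1 - p) *
       (if f k.1 then exp (2 * INR b) else 1))).
rewrite Rmult_assoc; congr (E * _).
rewrite (eq_bigr (fun k => if f k.1 then mm p else 1)); last first.
  move=> k _; rewrite /mm /=; case: (f k.1); rewrite /= ?Rmult_0_r ?Rmult_1_r ?exp_0; ring.
rewrite rowconv /C -big_split /=; apply: eq_bigr => i _.
case: (f i); rewrite ?prod_const; ring.
Qed.

Lemma Gf_ge0 n p eps f B : 0 <= Gf n p eps f B.
Proof.
rewrite /Gf; apply: Rmult_le_pos; first exact: Rlt_le (exp_pos _).
apply: Rmult_le_pos; apply: prodR_ge0 => i _; case: ifP => _;
  (apply: Rlt_le; apply: exp_pos) || lra.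
Qed.

Lemma point n p eps (B : bmat n) : ~~ good_event p eps B ->
  1 <= \big[Rplus/R0]_(f : {ffun 'I_n -> bool}) Gf n p eps f B.
Proof.
move=> Hbad.
have HH : eps * INR n < INR (heavy_ones p eps B).
  move: Hbad; rewrite /good_event; case: Rle_dec => // H _; lra.
set f0 := [ffun i => heavy_row p eps B i].
apply: Rle_trans (_ : Gf n p eps f0 B <= _); last first.
  rewrite (bigD1 f0) //=.
  have := @sumR_ge0 _ (fun f => f != f0) (fun f => Gf n p eps f B)
     (fun f _ => Gf_ge0 n p eps f B).
  move=> H; rewrite -{1}[Gf n p eps f0 B]Rplus_0_r; apply: Rplus_le_compat_l; exact: H.
have Hrow i : \big[Rmult/R1]_(j < n) exp (2 * INR (B (i, j)))
              = exp (2 * INR (row_ones B i)).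
  rewrite -exp_sum; congr exp; rewrite /row_ones INR_sum big_distrr //.
rewrite /Gf rowconv -big_split /=.
apply: Rle_trans (_ : exp (- (eps * INR n)) *
   \big[Rmult/R1]_(i < n) (if f0 i then exp (INR (row_ones B i)) else 1) <= _).
  have -> : \big[Rmult/R1]_(i < n) (if f0 i then exp (INR (row_ones B i)) else 1)
            = exp (INR (heavy_ones p eps B)).
    rewrite /heavy_ones INR_sum exp_sum [RHS]big_mkcond /=.
    by apply: eq_bigr => i _; rewrite /f0 ffunE.
  rewrite -exp_plus.
  have := exp_increasing 0 (- (eps * INR n) + INR (heavy_ones p eps B)).
  rewrite exp_0; move=> H; apply: Rlt_le; apply: H; lra.
apply: Rmult_le_compat_l; first exact: Rlt_le (exp_pos _).
apply: prodR_le => i _.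
case Hi: (f0 i); last lra.
rewrite Hrow -exp_plus; split; first exact: Rlt_le (exp_pos _).
move: Hi; rewrite /f0 ffunE /heavy_row; case: Rlt_dec => // HT _.
apply: Rlt_le; apply: exp_increasing; rewrite /Tt; lra.
Qed.

Lemma weight_ge0 n p (B : bmat n) : 0 <= p <= 1 -> 0 <= bern_weight p B.
Proof. move=> Hp; apply: prodR_ge0 => k _; case: (B k); lra. Qed.

Lemma a_bound n p eps : 0 <= p <= 1 -> 0 < eps <= / 2 ->
  exp (- Tt n p eps) * mm p ^ n <= eps / 2.
Proof.
move=> Hp He.
have He2 : exp 2 <= 9.
  have -> : (2 = 1 + 1)%R by ring.
  rewrite exp_plus; have := exp_le_3; have := exp_pos 1; nra.
have He1 : 1 <= exp 2.
  have := exp_increasing 0 2; rewrite exp_0; lra.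
have Hm : mm p ^ n <= exp (p * (exp 2 - 1) * INR n).
  have -> : mm p = 1 + p * (exp 2 - 1) by rewrite /mm; ring.
  apply: pow_le_exp; nra.
have Hn := pos_INR n.
apply: Rle_trans (_ : exp (- Tt n p eps) * exp (p * (exp 2 - 1) * INR n) <= _).
  apply: Rmult_le_compat_l => //; exact: Rlt_le (exp_pos _).
rewrite -exp_plus.
apply: Rle_trans (_ : exp (- (2 * ln (/ eps))) <= _).
  have : - Tt n p eps + p * (exp 2 - 1) * INR n <= - (2 * ln (/ eps)).
    rewrite /Tt.
    have : 0 <= p * INR n by nra.
    nra.
  case/Rle_lt_or_eq_dec => H; last by rewrite H; lra.
  by apply: Rlt_le; apply: exp_increasing.
rewrite ln_Rinv; last lra.
have -> : - (2 * - ln eps) = ln eps + ln eps by ring.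
rewrite exp_plus exp_ln; last lra.
nra.
Qed.

Theorem mainTheorem14 (n : nat) (p eps : R) :
  (0 <= p <= 1)%R -> (0 < eps <= / 2)%R ->
  (1 - exp (- (eps * INR n / 2)) <= bern_prob p (@good_event n p eps))%R.
Proof.
move=> Hp He.
have Htot := total n p.
rewrite (bigID (@good_event n p eps)) /= in Htot.
rewrite /bern_prob.
set S := fun B : bmat n => \big[Rplus/R0]_(f : {ffun 'I_n -> bool}) Gf n p eps f B.
set a := exp (- Tt n p eps) * mm p ^ n.
have Ha := a_bound n p eps Hp He.
have Ha0 : 0 <= a.
  apply: Rmult_le_pos; first exact: Rlt_le (exp_pos _).
  apply: pow_le; rewrite /mm; have := exp_pos 2; nra.
have Hbad : \big[Rplus/R0]_(B | ~~ @good_event n p eps B) bern_weight p B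
            <= exp (- (eps * INR n / 2)).
  apply: Rle_trans (_ : \big[Rplus/R0]_(B | ~~ @good_event n p eps B)
                         (bern_weight p B * S B) <= _).
    apply: sumR_le => B HB.
    have := point n p eps B HB; have := weight_ge0 n p B Hp; rewrite -/(S B); nra.
  apply: Rle_trans (_ : \big[Rplus/R0]_(B : bmat n) (bern_weight p B * S B) <= _).
    rewrite [X in _ <= X](bigID (@good_event n p eps)) /=.
    have : 0 <= \big[Rplus/R0]_(B | @good_event n p eps B) (bern_weight p B * S B).
      apply: sumR_ge0 => B _; apply: Rmult_le_pos; first exact: weight_ge0 n p B Hp.
      apply: sumR_ge0 => f _; exact: Gf_ge0.
    move=> H0; set U := \big[Rplus/R0]_(B | ~~ _) _.
    apply: (Rle_trans _ (0 + U)); first lra.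
    apply: Rplus_le_compat; first exact: H0.
    apply: Req_le; rewrite /U. reflexivity.
  have -> : \big[Rplus/R0]_(B : bmat n) (bern_weight p B * S B)
      = \big[Rplus/R0]_(f : {ffun 'I_n -> bool})
          \big[Rplus/R0]_(B : bmat n) (bern_weight p B * Gf n p eps f B).
    rewrite exchange_big /=; apply: eq_bigr => B _; by rewrite /S big_distrr.
  rewrite (eq_bigr (fun f : {ffun 'I_n -> bool} => exp (- (eps * INR n)) *
     \big[Rmult/R1]_(i < n) (if f i then a else 1))); last first.
    move=> f _; exact: expec.
  rewrite -big_distrr /=.
  rewrite (@sum_prod_bool _ (fun (i : 'I_n) (b : bool) => if b then a else 1)).
  rewrite prod_const.
  apply: Rle_trans (_ : exp (- (eps * INR n)) * exp (a * INR n) <= _).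
    apply: Rmult_le_compat_l; first exact: Rlt_le (exp_pos _).
    rewrite Rplus_comm; exact: pow_le_exp.
  rewrite -exp_plus.
  have Hn := pos_INR n.
  have : - (eps * INR n) + a * INR n <= - (eps * INR n / 2).
    have := Rmult_le_compat_r (INR n) _ _ Hn Ha; rewrite -/a; lra.
  case/Rle_lt_or_eq_dec => H; last by rewrite H; lra.
  by apply: Rlt_le; apply: exp_increasing.
move: Htot Hbad.
set X := \big[Rplus/R0]_(i | good_event p eps i) bern_weight p i.
set Y := \big[Rplus/R0]_(i | ~~ good_event p eps i) bern_weight p i.
lra.
Qed.
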